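(* Let $s\ge 1$, $q\in\{1,\dots,5^s-1\}$, $n\ge 3$ and $i\ge 1$ be integers. Consider the cylindrical Lights Out game on a board with $i$ rows and $n$ columns whose lights have $k=5^s$ states, with every light initially in the same state $k-q$. If $i\equiv 0\pmod{5^s}$ or $i\equiv -1\pmod{5^s}$, then the game is one-pass solvable.
   Context: Cylindrical Lights Out game: a grid of buttons with $i$ rows (numbered $1,\dots,i$ from top to bottom) and $n$ columns, whose left and right sides are identified, so column $1$ and column $n$ are adjacent; rows do not wrap around. Each button has a light whose state is an element of $\mathbb{Z}/k\mathbb{Z}$, state $0$ meaning ''off''. Pressing a button once adds $1 \pmod k$ to the state of its own light and to the states of the lights orthogonally adjacent to it (above, below, left, right, where they exist, with columns taken cyclically). One-pass chasing: for $r=2,3,\dots,i$ in turn, press each button in row $r$ the number of times in $\{0,\dots,k-1\}$ needed to bring the light directly above it (in row $r-1$) to state $0$. The game is one-pass solvable if after this procedure all lights on the board are in state $0$. *)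

(* Defs.v *)
From mathcomp Require Import all_boot.
Set Implicit Arguments. Unset Strict Implicit. Unset Printing Implicit Defensive.

(* Board with i rows and n columns; rows are 0-indexed (paper's row r+1 is
   our row r), columns 0..n-1 taken cyclically.  A board is a function
   giving the state (a natural number read modulo k, kept in [0,k)) of the
   light at (row, column). *)
Definition board := nat -> nat -> nat.

Definition affects (n r c r' c' : nat) : bool :=
  [|| (r' == r) && (c' == c),
      (r' == r) && ((c' == c.+1 %% n) || (c == c'.+1 %% n))
    | (c' == c) && ((r'.+1 == r) || (r.+1 == r'))].

Definition press (k n r c t : nat) (b : board) : board :=
  fun r' c' => if affects n r c r' c' then (b r' c' + t) %% k else b r' c'.

(* Process row r (r >= 1): for each column c in turn, press (r,c) the number
   of times in {0,..,k-1} needed to turn light (r-1,c) off. *)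
Definition chase_row (k n r : nat) (b : board) : board :=
  foldl (fun b c => press k n r c ((k - b r.-1 c %% k) %% k) b) b (iota 0 n).

Definition chase (k i n : nat) (b : board) : board :=
  foldl (fun b r => chase_row k n r b) b (iota 1 i.-1).

Definition one_pass_solvable (k i n : nat) (b : board) : Prop :=
  forall r c, r < i -> c < n -> chase k i n b r c = 0.

(* Main.v *)
Require Import Defs.
From mathcomp Require Import all_boot all_order all_algebra.
From mathcomp Require Import zify.
From mathcomp Require Import ring.
Import GRing.Theory.

Lemma count_mem_sub (s t : seq nat) : uniq s -> uniq t -> {subset s <= t} ->
  count (mem s) t = size s.
Proof.
move=> us ut sst; rewrite -size_filter; apply: perm_size.
apply: uniq_perm; [exact: filter_uniq | exact: us |].
move=> x; rewrite mem_filter; apply/andP/idP => [[] //|xs]; split=> //; exact: sst.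
Qed.

Lemma x2E n c' : 3 <= n -> c' < n ->
  (c' + n.-1) %% n = if c' == 0 then n.-1 else c'.-1.
Proof.
move=> n3 cn; case: c' cn => [|c] cn /=.
  by rewrite add0n modn_small //; lia.
have -> : (c.+1 + n.-1 = c + n)%N by lia.
by rewrite modnDr modn_small //; lia.
Qed.

Lemma x3E n c' : 3 <= n -> c' < n ->
  c'.+1 %% n = if c'.+1 == n then 0 else c'.+1.
Proof.
move=> n3 cn; case: eqP => [->|ne]; first by rewrite modnn.
by rewrite modn_small //; lia.
Qed.

Lemma pred_eq n c c' : 3 <= n -> c < n -> c' < n ->
  (c' == c.+1 %% n) = (c == (c' + n.-1) %% n).
Proof.
move=> n3 cn cn'; rewrite x2E // x3E //.
case: (c.+1 =P n) => h1; case: (c' =P 0) => h2; apply/eqP/eqP; lia.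
Qed.

Lemma count_aff n r r' c' : 3 <= n -> c' < n ->
  count (fun c => affects n r c r' c') (iota 0 n) =
  if r' == r then 3 else if (r'.+1 == r) || (r.+1 == r') then 1 else 0.
Proof.
move=> n3 cn.
case: (r' =P r) => [->|ne].
  rewrite (@eq_in_count _ _ (mem [:: c'; (c' + n.-1) %% n; c'.+1 %% n])).
    apply: count_mem_sub; last first.
    - move=> x; rewrite !inE mem_iota add0n => /or3P [] /eqP ->; rewrite ?ltn_pmod //; lia.
    - exact: iota_uniq.
    rewrite /= !inE x2E // x3E // andbT.
    case: (c'.+1 =P n) => h1; case: (c' =P 0) => h2; rewrite /=;
    (apply/andP; split; [apply/negP => /orP [] |apply/eqP]); try move/eqP; lia.
  move=> c; rewrite mem_iota add0n => /andP [_ cn2].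
  rewrite /affects eqxx /= !inE pred_eq // (gtn_eqF (ltnSn r)) /= andbF orbF.
  by rewrite [c == c']eq_sym orbA.
rewrite (@eq_count _ _ (fun c => ((r'.+1 == r) || (r.+1 == r')) && (c == c'))).
  case: (_ || _) => /=; last by rewrite count_pred0.
  by rewrite (count_uniq_mem _ (iota_uniq 0 n)) mem_iota add0n cn.
move=> c; rewrite /affects.
have -> : (r' == r) = false by apply/eqP.
by rewrite /= [c == c']eq_sym andbC.
Qed.

Lemma fold_press k n r t A (b : board) l r' c' :
  0 < r -> uniq l ->
  (forall c0, c0 \in l -> b r.-1 c0 = A %[mod k]) ->
  t = (k - A %% k) %% k ->
  foldl (fun b c => press k n r c ((k - b r.-1 c %% k) %% k) b) b l r' c'
    = b r' c' + t * count (fun c => affects n r c r' c') l %[mod k].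
Proof.
move=> r0; elim: l b => [|c l IH] b /=; first by rewrite muln0 addn0.
case/andP => cnl ul Hb Ht.
rewrite (Hb c (mem_head _ _)) -Ht IH //.
  rewrite -modnDml /press; case: (affects n r c r' c') => /=.
    by rewrite modn_mod modnDml mulnDr muln1 addnA.
  by rewrite add0n modnDml.
move=> c0 c0l; rewrite /press.
have -> : affects n r c r.-1 c0 = false.
  rewrite /affects.
  have -> : (r.-1 == r) = false by clear -r0; case: r r0 => // r _; rewrite (ltn_eqF (ltnSn r)).
  have -> : (c0 == c) = false by apply/eqP => e; move: cnl; rewrite -e c0l.
  by [].
by apply: Hb; rewrite inE c0l orbT.
Qed.

Lemma chase_row_spec k n r (b : board) A r' c' :
  0 < r -> 3 <= n -> c' < n ->
  (forall c0, c0 < n -> b r.-1 c0 = A %[mod k]) ->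
  chase_row k n r b r' c' = b r' c' + (k - A %% k) %% k *
     (if r' == r then 3 else if (r'.+1 == r) || (r.+1 == r') then 1 else 0) %[mod k].
Proof.
move=> r0 n3 cn Hb; rewrite /chase_row (@fold_press k n r ((k - A %% k) %% k) A) ?iota_uniq //.
  by rewrite count_aff.
by move=> c0; rewrite mem_iota add0n => /andP [_ /Hb].
Qed.

Lemma press_lt k n r c t (b : board) : 0 < k -> (forall r c, b r c < k) ->
  forall r' c', press k n r c t b r' c' < k.
Proof.
move=> k0 Hb r' c'; rewrite /press; case: ifP => _; last exact: Hb.
by rewrite ltn_pmod.
Qed.

Lemma chase_lt k i n (b : board) : 0 < k -> (forall r c, b r c < k) ->
  forall r c, chase k i n b r c < k.
Proof.
move=> k0; rewrite /chase; elim: (iota 1 i.-1) b => [|r l IH] b Hb //=.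
apply: IH; rewrite /chase_row; elim: (iota 0 n) b Hb => [|c l' IH'] b Hb //=.
by apply: IH'; apply: press_lt.
Qed.

Fixpoint X (k q r : nat) : nat :=
  match r with
  | 0 => 0
  | S r1 => match r1 with
            | 0 => q
            | S r0 => (k - (k - q + X k q r0 + 3 * X k q r1) %% k) %% k
            end
  end.

Lemma XS k q R : 0 < q < k ->
  X k q R.+1 = (k - (k - q + X k q R.-1 + 3 * X k q R) %% k) %% k.
Proof.
move=> /andP [q0 qk]; case: R => [|R] //=.
rewrite muln0 !addn0 (@modn_small (k - q)); last lia.
rewrite modn_small; lia.
Qed.

Lemma negmod k W : 0 < k -> k %| (k - W %% k) %% k + W.
Proof.
move=> k0; rewrite /dvdn modnDml -modnDmr subnK; last exact: ltnW (ltn_pmod _ _).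
by rewrite modnn.
Qed.

Section Inv.
Definition V k q R r :=
  if r < R then 0 else if r == R then k - q + X k q R.-1 + 3 * X k q R
  else if r == R.+1 then k - q + X k q R else k - q.

Definition B k q n R := foldl (fun b r => chase_row k n r b) (fun _ _ => k - q) (iota 1 R).

Lemma inv k q n R : 0 < q < k -> 3 <= n ->
  forall r c, c < n -> B k q n R r c = V k q R r %[mod k].
Proof.
move=> qk n3; elim: R => [|R IH] r c cn.
  by rewrite /B /V /=; case: r => [|[|r]] /=; rewrite ?muln0 ?addn0.
rewrite /B; have -> : iota 1 R.+1 = iota 1 R ++ [:: R.+1] by have := iotaD 1 R 1; rewrite addn1 add1n => ->.
rewrite foldl_cat /= -/(B k q n R).
rewrite (@chase_row_spec _ _ _ _ (V k q R R)) //; last first.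
  by move=> c0 c0n; rewrite /= IH.
rewrite -modnDml IH // modnDml.
have -> : (k - V k q R R %% k) %% k = X k q R.+1.
  by rewrite XS // /V ltnn eqxx.
have : r < R \/ r = R \/ r = R.+1 \/ r = R.+2 \/ R.+2 < r by lia.
case=> [h|[->|[->|[->|h]]]]; rewrite /V.
all: set x := X k q R.+1.
all: repeat (case: ifP => ?; try (exfalso; lia)).
all: rewrite ?muln0 ?muln1 ?addn0 //.
  rewrite /x XS // addnC mod0n; apply/eqP; exact: negmod (leq_ltn_trans (leq0n q) (proj2 (andP qk))).
by rewrite mulnC.
Qed.
End Inv.

Open Scope ring_scope.
Fixpoint fib (n : nat) : int :=
  match n with 0 => 0 | S m => match m with 0 => 1 | S p => fib m + fib p end end.

Lemma fibSS n : fib n.+2 = fib n.+1 + fib n. Proof. by []. Qed.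

Lemma fib_add m n : fib (m + n).+1 = fib m.+1 * fib n.+1 + fib m * fib n.
Proof.
suff H : forall n, fib (m + n).+1 = fib m.+1 * fib n.+1 + fib m * fib n /\
                   fib (m + n.+1).+1 = fib m.+1 * fib n.+2 + fib m * fib n.+1.
  by case: (H n).
clear n; elim=> [|n [IH1 IH2]].
  rewrite addn0 addn1 /=; split; ring.
split=> //.
rewrite !addnS fibSS -addnS IH2 addnS IH1 (fibSS n.+1) (fibSS n).
ring.
Qed.

Lemma fib5 m : exists Q, fib (5 * m)%N = 5 * fib m * Q.
Proof.
case: m => [|p]; first by exists 0; rewrite muln0 /=; ring.
set a := fib p; set b := fib p.+1.
have h1 : fib (p + p).+1 = b * b + a * a by rewrite fib_add.
have h2 : fib (p + p).+2 = b * (b + a) + a * b by rewrite -addnS fib_add.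
have h3 : fib (p + p).+3 = (b + a) * (b + a) + b * b.
  by rewrite -addnS -addSn fib_add fibSS.
have h4 : fib ((p + p).+1 + (p + p).+1).+1 = fib (p + p).+2 * fib (p + p).+2 + fib (p+p).+1 * fib (p+p).+1
  by rewrite fib_add.
have h5 : fib ((p + p).+1 + (p + p).+1).+2 = fib (p + p).+2 * fib (p + p).+3 + fib (p+p).+1 * fib (p+p).+2
  by rewrite -addnS fib_add.
have h6 : fib (((p + p).+1 + (p + p).+1).+1 + p.+1).+1 =
   fib ((p + p).+1 + (p + p).+1).+2 * fib p.+2 + fib ((p + p).+1 + (p + p).+1).+1 * fib p.+1
  by rewrite fib_add.
have -> : (5 * p.+1 = (((p + p).+1 + (p + p).+1).+1 + p.+1).+1)%N by lia.
rewrite h6 h5 h4 h3 h2 h1 fibSS -/a -/b.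
exists (5 * b^+4 + 5 * b^+2 * (a*a + a*b - b*b) + (a*a + a*b - b*b)^+2).
ring.
Qed.

Lemma fib_pow5 s j : ((5 ^ s)%N%:Z %| fib (5 ^ s * j)%N)%Z.
Proof.
elim: s j => [|s IH] j; first by rewrite expn0 dvd1z.
rewrite expnS -mulnA; have [Q ->] := fib5 (5 ^ s * j)%N.
rewrite PoszM -mulrA; apply: dvdz_mul => //; exact: dvdz_mulr.
Qed.

Lemma cassini n : fib n.+1 * fib n.+1 - fib n * fib n.+2 = (-1) ^+ n.
Proof.
elim: n => [|n IH]; first by rewrite /=; ring.
rewrite exprS -IH !fibSS; ring.
Qed.

Definition g r : int := (-1) ^+ r.+1 * fib r * fib r.+1.

Lemma g_rec r : g r.+2 = 1 - g r - 3 * g r.+1.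
Proof.
rewrite /g; have C := cassini r.
rewrite !fibSS in C *.
move: C; set a := fib r; set b := fib r.+1; set t := (-1) ^+ r => C.
have tt : t * t = 1 by rewrite /t -exprMn mulrNN mulr1 expr1n.
rewrite !exprS -/t !mulN1r.
have one : (1:int) = (b * b - a * (b + a)) * (b * b - a * (b + a)) by rewrite C tt.
rewrite [X in X - _ - _]one -C.
ring.
Qed.

Lemma X_cong k q r : (0 < q < k)%N ->
  ((k%:Z) %| (X k q r)%:Z - q%:Z * g r)%Z.
Proof.
move=> qk; have k0 : (0 < k)%N by case/andP: qk => q0 qk'; apply: leq_ltn_trans qk'.
suff H : forall r, ((k%:Z) %| (X k q r)%:Z - q%:Z * g r)%Z /\
                   ((k%:Z) %| (X k q r.+1)%:Z - q%:Z * g r.+1)%Z by case: (H r).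
clear r; elim=> [|r [IH0 IH1]].
  split; apply/dvdzP; exists 0; rewrite /g /=; ring.
split=> //.
have hN : (k %| X k q r.+2 + (k - q + X k q r + 3 * X k q r.+1))%N := negmod _ _ k0.
have : ((k%:Z) %| (X k q r.+2 + (k - q + X k q r + 3 * X k q r.+1))%N%:Z)%Z by rewrite dvdzE.
rewrite !PoszD -subzn; last by case/andP: qk => _ /ltnW.
move=> hW.
have -> : (X k q r.+2)%:Z - q%:Z * g r.+2 =
  ((X k q r.+2)%:Z + (k%:Z - q%:Z + (X k q r)%:Z + ((X k q r.+1)%:Z + ((X k q r.+1)%:Z + ((X k q r.+1)%:Z + 0))))) - k%:Z
  - ((X k q r)%:Z - q%:Z * g r) - 3 * ((X k q r.+1)%:Z - q%:Z * g r.+1).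
  rewrite g_rec; ring.
apply: rpredB; [apply: rpredB; [apply: rpredB => //; exact: dvdzz | exact: IH0] |].
exact: dvdz_mull.
Qed.

Close Scope ring_scope.

Theorem theorem8 (s q n i : nat) :
  1 <= s -> 1 <= q <= 5 ^ s - 1 -> 3 <= n -> 1 <= i ->
  (i %% 5 ^ s = 0 \/ (i + 1) %% 5 ^ s = 0) ->
  one_pass_solvable (5 ^ s) i n (fun _ _ => 5 ^ s - q).
Proof.
move=> s1 /andP [q1 qs] n3 i1 hi r c ri cn.
have k5 : 5 <= 5 ^ s.
  case: s s1 {qs hi} => // s _; rewrite expnS; have := expn_gt0 5 s; lia.
have qk : 0 < q < 5 ^ s by apply/andP; split; lia.
have k0 : 0 < 5 ^ s by lia.
have i2 : 2 <= i.
  case: i i1 hi ri => [|[|i]] // _; rewrite !modn_small //; [by case | lia | lia].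
have Hlt := @chase_lt (5 ^ s) i n (fun _ _ => 5 ^ s - q) k0 (fun _ _ => ltac:(lia)) r c.
rewrite -(modn_small Hlt); clear Hlt.
change (B (5 ^ s) q n i.-1 r c %% 5 ^ s = 0).
rewrite inv // /V.
case: ifP => [_|/negbT]; first by rewrite mod0n.
rewrite -leqNgt => hr.
have -> : r = i.-1 by lia.
rewrite eqxx.
case: i i2 {i1 ri hr} hi => [|[|j]] // _ hi /=.
apply/eqP.
have hg : ((5 ^ s)%N%:Z %| g j.+2)%Z.
  rewrite /g; case: hi => hi.
    apply: dvdz_mulr; apply: dvdz_mull.
    have -> : j.+2 = (5 ^ s * (j.+2 %/ 5 ^ s))%N.
      by rewrite {1}(divn_eq j.+2 (5 ^ s)) hi addn0 mulnC.
    exact: fib_pow5.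
  apply: dvdz_mull.
  have -> : j.+3 = (5 ^ s * (j.+3 %/ 5 ^ s))%N.
    by rewrite {1}(divn_eq j.+3 (5 ^ s)) -addn1 hi addn0 mulnC.
  exact: fib_pow5.
have hX := @X_cong (5 ^ s) q j.+2 qk.
have hN : (5 ^ s %| X (5 ^ s) q j.+2 + (5 ^ s - q + X (5 ^ s) q j + 3 * X (5 ^ s) q j.+1))%N
  := negmod _ _ k0.
set W := (5 ^ s - q + X (5 ^ s) q j + 3 * X (5 ^ s) q j.+1)%N in hN *.
have : ((5 ^ s)%N%:Z %| W%:Z)%Z.
  have -> : (W%:Z = (X (5 ^ s) q j.+2 + W)%N%:Z - ((X (5 ^ s) q j.+2)%:Z - q%:Z * g j.+2)
                   - q%:Z * g j.+2)%R.
    rewrite PoszD; ring.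
  apply: rpredB; [apply: rpredB => //; by rewrite dvdzE | exact: dvdz_mull].
by rewrite dvdzE.
Qed.
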